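(* For every integer $k\ge0$ and every $m\in\mathbb Z$, the elements ${}_kG\Theta_m(x,a)$ and ${}_kG\Theta^*_m(x,a)$ lie in $G\Gamma\otimes_{\mathbb Q[\beta]}\mathcal R_a$ and are invariant under the action of the subgroup $W_{(k)}\subset W_\infty$ (equivalently, fixed by $s_0^a,s_1^a,\dots,s_{k-1}^a$ and by $s_i^a$, $i>k$).
   Context: Grading: $\deg x_i=\deg a_i=\deg b_i=1$, $\deg\beta=-1$; $R[[y_1,\dots]]_{\mathrm{gr}}$ denotes the ring of finite sums of homogeneous formal power series. Notation: $u\oplus v=u+v+\beta uv$, $u\ominus v=(u-v)/(1+\beta v)$, $\bar u=-u/(1+\beta u)$. $G\Gamma$ is the subring of $\mathbb Q[\beta][[x_1,x_2,\dots]]_{\mathrm{gr}}$ of series $f$ that are symmetric in the $x_i$ and satisfy $f(t,\bar t,x_3,x_4,\dots)=f(0,0,x_3,x_4,\dots)$. $\mathcal R_a=\bigcup_m\mathbb Q[\beta][[a_1,\dots,a_m]]_{\mathrm{gr}}$. $W_\infty$ is the infinite hyperoctahedral group generated by $s_0,s_1,\dots$ (signed permutations), $W_{(k)}$ the subgroup generated by $s_i$, $i\ne k$. It acts on $G\Gamma\otimes\mathcal R_a$ by: $s_i^a$ ($i\ge1$) swaps $a_i$ and $a_{i+1}$; $s_0^a f(x_1,x_2,\dots;a_1,a_2,\dots)=f(a_1,x_1,x_2,\dots;\bar a_1,a_2,\dots)$. The functions are defined by \[ \sum_{m\in\mathbb Z}{}_kG\Theta_m(x,a)u^m=\frac{1}{1+\beta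 u^{-1}}\prod_{i=1}^\infty\frac{1+(u+\beta)x_i}{1+(u+\beta)\bar x_i}\prod_{i=1}^k(1+(u+\beta)a_i),\qquad \sum_m{}_kG\Theta^*_m(x,a)u^m=\frac{1}{2+\beta u^{-1}}\sum_m{}_kG\Theta_m(x,a)u^m, \] with $\frac1{1+\beta u^{-1}}=\sum_{i\ge0}(-\beta)^iu^{-i}$, $\frac{1}{2+\beta u^{-1}}=\frac12\sum_{s\ge0}(-\beta/2)^su^{-s}$. *)

(* Defs.v *)
From HB Require Import structures.
From mathcomp Require Import all_boot all_order all_algebra perm.
Set Implicit Arguments. Unset Strict Implicit. Unset Printing Implicit Defensive.
Import Order.TTheory GRing.Theory Num.Theory.
Local Open Scope ring_scope.

Definition beta : {poly rat} := 'X.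

(* An element of Q[beta][[x_1,x_2,...; a_1,a_2,...]]: the coefficient
   (a polynomial in beta) of the monomial x^e a^g, where e (resp. g) is the
   exponent sequence of x_1,x_2,... (resp. a_1,a_2,...), read with
   [nth 0] (trailing zeros are irrelevant, see [wf]). *)
Definition ser := seq nat -> seq nat -> {poly rat}.

Definition wf (f : ser) : Prop :=
  forall e g, f (rcons e 0%N) g = f e g /\ f e (rcons g 0%N) = f e g.

(* total degree: deg x_i = deg a_i = 1, deg beta = -1 *)
Definition mdeg (e g : seq nat) (i : nat) : int :=
  (sumn e + sumn g)%:Z - i%:Z.

(* finite sum of homogeneous series: only finitely many degrees occur *)
Definition graded (f : ser) : Prop :=
  exists ds : seq int, forall e g i, (f e g)`_i != 0 -> mdeg e g i \in ds.

Definition afree (f : ser) : Prop :=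
  forall e g, has (fun n => n != 0%N) g -> f e g = 0.
Definition xfree (f : ser) : Prop :=
  forall e g, has (fun n => n != 0%N) e -> f e g = 0.

Definition psmul (R : nzRingType) (f h : nat -> R) : nat -> R :=
  fun n => \sum_(i < n.+1) f i * h (n - i)%N.
Definition psone (R : nzRingType) : nat -> R := fun n => (n == 0%N)%:R.
Definition psexp (R : nzRingType) (f : nat -> R) (n : nat) : nat -> R :=
  iter n (psmul f) (@psone R).
(* tbar = -t/(1 + b t) = sum_{j>=1} -(-b)^(j-1) t^j *)
Definition tbarR (R : nzRingType) (b : R) : nat -> R :=
  fun j => if j is j'.+1 then - (- b) ^+ j' else 0.

Definition sym_x (f : ser) : Prop :=
  forall (n : nat) (s : 'S_n) e g, (size e <= n)%N ->
    f [seq nth 0%N e (s i) | i <- enum 'I_n] g = f e g.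

(* f(t, tbar, x_3, x_4, ...), with the variable t put in the slot of x_1
   (x_2 no longer occurs). *)
Definition subst_t_tbar (f : ser) : ser := fun e g =>
  if nth 0%N e 1 != 0%N then 0 else
  \sum_(e1 < (nth 0%N e 0).+1) \sum_(e2 < (nth 0%N e 0).+1)
    f ((e1 : nat) :: (e2 : nat) :: drop 2 e) g * psexp (tbarR beta) e2 (nth 0%N e 0 - e1)%N.
Definition subst_0_0 (f : ser) : ser := fun e g =>
  if (nth 0%N e 0 == 0%N) && (nth 0%N e 1 == 0%N)
  then f (0 :: 0 :: drop 2 e)%N g else 0.

Definition inGGamma (f : ser) : Prop :=
  [/\ wf f, graded f, afree f, sym_x f & subst_t_tbar f = subst_0_0 f].

(* ---- the ring R_a = union_m Q[beta][[a_1..a_m]]_gr ---- *)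
Definition inRa (f : ser) : Prop :=
  [/\ wf f, graded f, xfree f &
      exists m, forall e g, has (fun n => n != 0%N) (drop m g) -> f e g = 0].

Fixpoint subexps (e : seq nat) : seq (seq nat) :=
  if e is n :: e' then
    [seq (i :: s) | i <- iota 0 n.+1, s <- subexps e'] else [:: [::]].
Definition esub (e e1 : seq nat) : seq nat :=
  [seq (nth 0 e i - nth 0 e1 i)%N | i <- iota 0 (size e)].
Definition sermul (f h : ser) : ser := fun e g =>
  \sum_(e1 <- subexps e) \sum_(g1 <- subexps g) f e1 g1 * h (esub e e1) (esub g g1).

(* G Gamma (x)_{Q[beta]} R_a, as the subring of series spanned by products *)
Definition inGGammaRa (f : ser) : Prop :=
  exists (n : nat) (G R : 'I_n -> ser),
    (forall i, inGGamma (G i) /\ inRa (R i)) /\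
    forall e g, f e g = \sum_(i < n) sermul (G i) (R i) e g.

(* s_0^a f = f(a_1, x_1, x_2, ...; abar_1, a_2, ...) *)
Definition s0a (f : ser) : ser := fun e g =>
  \sum_(e1 < (head 0%N g).+1) \sum_(g1 < (head 0%N g).+1)
    f ((e1 : nat) :: e) ((g1 : nat) :: behead g) * psexp (tbarR beta) g1 (head 0%N g - e1)%N.
Definition swapexp (p : nat) (g : seq nat) : seq nat :=
  [seq nth 0%N g (if j == p then p.+1 else if j == p.+1 then p else j)
  | j <- iota 0 (maxn (size g) p.+2)].
(* s_i^a (i >= 1) swaps a_i and a_{i+1} *)
Definition sia (i : nat) (f : ser) : ser := fun e g => f e (swapexp i.-1 g).
Definition sa (i : nat) : ser -> ser := if i == 0%N then s0a else sia i.

(* polynomials in u with coefficients in Q[beta] *)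
Definition uu : {poly {poly rat}} := 'X.
Definition bb : {poly {poly rat}} := beta%:P.
Definition cc : {poly {poly rat}} := uu + bb.
(* coefficients (in t) of 1 + (u+beta) t *)
Definition lin (j : nat) : {poly {poly rat}} :=
  if j == 0%N then 1 else if j == 1%N then cc else 0.
(* coefficients of 1/(1 + (u+beta) tbar) = sum_n (-(u+beta))^n tbar^n *)
Definition psi (j : nat) : {poly {poly rat}} :=
  \sum_(n < j.+1) (- cc) ^+ n * psexp (tbarR bb) n j.
(* coefficients of (1 + (u+beta) t) / (1 + (u+beta) tbar) *)
Definition phi (j : nat) : {poly {poly rat}} := psmul lin psi j.

(* coefficient of x^e a^g in prod_i phi(x_i) * prod_{i<=k} (1+(u+beta)a_i),
   a polynomial in u *)
Definition Pc (k : nat) (e g : seq nat) : {poly {poly rat}} :=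
  if has (fun n => n != 0%N) (drop k g) then 0 else
  (\prod_(i < size e) phi (nth 0%N e i)) * \prod_(i < k) lin (nth 0%N g i).

(* coefficient of u^m in (sum_{i>=0} (-beta)^i u^(-i)) * sum_j Pc_j u^j *)
Definition GTheta (k : nat) (m : int) : ser := fun e g =>
  \sum_(j < size (Pc k e g) | m <= j%:Z) (- beta) ^+ absz (j%:Z - m) * (Pc k e g)`_j.

(* coefficient of u^m in 1/2 sum_s (-beta/2)^s u^(-s) * sum_m' GTheta_m' u^m';
   the terms with s >= |size Pc - m| + 1 all vanish since GTheta_m' = 0
   at (e,g) for m' >= size (Pc k e g). *)
Definition GThetaS (k : nat) (m : int) : ser := fun e g =>
  (2%:R : rat)^-1 *:
  \sum_(s < (absz ((size (Pc k e g))%:Z - m)).+1)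
    ((- (2%:R : rat)^-1) ^+ s *: beta ^+ s) * GTheta k (m + s%:Z) e g.

(* Main.v *)
Require Import Defs.
From HB Require Import structures.
From mathcomp Require Import all_boot all_order all_algebra perm.
From mathcomp Require Import ring zify.
From Stdlib Require Import FunctionalExtensionality.
Set Implicit Arguments. Unset Strict Implicit. Unset Printing Implicit Defensive.
Import Order.TTheory GRing.Theory Num.Theory.
Local Open Scope ring_scope.

Lemma sum_widen (V : nmodType) (F : nat -> V) n B :
  (n <= B)%N -> (forall i, (n <= i)%N -> (i < B)%N -> F i = 0) ->
  \sum_(i < n) F i = \sum_(i < B) F i.
Proof.
move=> nB H; rewrite -(big_mkord xpredT) -(big_mkord xpredT F).
rewrite [RHS](big_cat_nat (leq0n n) nB) /= [X in _ = _ + X]big_nat_cond.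
rewrite [X in _ = _ + X]big1 ?addr0 // => i /andP[/andP[? ?] _]; exact: H.
Qed.

Definition RR := {poly {poly rat}}.

Definition eqm (N : nat) (p q : {poly RR}) := forall i, (i < N)%N -> p`_i = q`_i.

Lemma eqm_refl N p : eqm N p p. Proof. by []. Qed.
Lemma eqm_sym N p q : eqm N p q -> eqm N q p. Proof. by move=> H i Hi; rewrite H. Qed.
Lemma eqm_trans N p q r : eqm N p q -> eqm N q r -> eqm N p r.
Proof. by move=> H1 H2 i Hi; rewrite H1 // H2. Qed.
Lemma eqm_add N p q p' q' : eqm N p p' -> eqm N q q' -> eqm N (p + q) (p' + q').
Proof. by move=> H1 H2 i Hi; rewrite !coefD H1 // H2. Qed.
Lemma eqm_mul N p q p' q' : eqm N p p' -> eqm N q q' -> eqm N (p * q) (p' * q').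
Proof.
move=> H1 H2 i Hi; rewrite !coefM; apply: eq_bigr => j _.
have Hj : (j < N)%N by apply: leq_ltn_trans Hi; have := ltn_ord j; rewrite ltnS.
have Hj' : (i - j < N)%N by apply: leq_ltn_trans Hi; exact: leq_subr.
by rewrite H1 // H2.
Qed.

Lemma pow_low (p : {poly RR}) k j : p`_0 = 0 -> (j < k)%N -> (p ^+ k)`_j = 0.
Proof.
move=> p0; elim: k j => [//|k IH] j Hj.
rewrite exprS coefM big1 // => i _.
case: (nat_of_ord i) (ltn_ord i) => [|i'] Hi; first by rewrite p0 mul0r.
by rewrite IH ?mulr0 //; rewrite ltnS in Hi; lia.
Qed.

Lemma eqm_pow N p q k : eqm N p q -> eqm N (p ^+ k) (q ^+ k).
Proof.
move=> H; elim: k => [|k IH]; first exact: eqm_refl.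
by rewrite !exprS; apply: eqm_mul.
Qed.

Lemma coef_comp (p s : {poly RR}) B j : (size p <= B)%N ->
  (p \Po s)`_j = \sum_(i < B) p`_i * (s ^+ i)`_j.
Proof.
move=> HB; rewrite comp_polyE coef_sum.
rewrite -(@sum_widen _ (fun i => p`_i * (s ^+ i)`_j) (size p) B) //.
- by apply: eq_bigr => i _; rewrite coefZ.
- by move=> i Hi _; rewrite nth_default ?mul0r.
Qed.

Lemma eqm_comp_l N p q (s : {poly RR}) : eqm N p q -> s`_0 = 0 -> eqm N (p \Po s) (q \Po s).
Proof.
move=> H s0 j Hj.
rewrite (@coef_comp p s (size p + size q + j.+1)) ?leq_addr //; last by lia.
rewrite (@coef_comp q s (size p + size q + j.+1)); last by lia.
rewrite -(@sum_widen _ (fun i => p`_i * (s ^+ i)`_j) j.+1); last first.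
  by move=> i Hi _; rewrite pow_low ?mulr0.
  by lia.
rewrite -(@sum_widen _ (fun i => q`_i * (s ^+ i)`_j) j.+1); last first.
  by move=> i Hi _; rewrite pow_low ?mulr0.
  by lia.
apply: eq_bigr => i _; rewrite H //.
by apply: leq_ltn_trans Hj; have := ltn_ord i; rewrite ltnS.
Qed.

Lemma eqm_comp_r N (p s s' : {poly RR}) : eqm N s s' -> eqm N (p \Po s) (p \Po s').
Proof.
move=> H j Hj; rewrite !(@coef_comp p _ (size p)) //.
by apply: eq_bigr => i _; rewrite (eqm_pow i H).
Qed.

Definition tpoly N (f : nat -> RR) : {poly RR} := \poly_(i < N) f i.

Lemma psmul_tp N f h j : (j < N)%N -> psmul f h j = (tpoly N f * tpoly N h)`_j.
Proof.
move=> Hj; rewrite coefM /psmul; apply: eq_bigr => i _.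
have Hi : (i < N)%N by apply: leq_ltn_trans Hj; have := ltn_ord i; rewrite ltnS.
have Hi' : (j - i < N)%N by apply: leq_ltn_trans Hj; exact: leq_subr.
by rewrite !coef_poly Hi Hi'.
Qed.

Lemma psexp_tp N f e j : (j < N)%N -> psexp f e j = (tpoly N f ^+ e)`_j.
Proof.
elim: e j => [|e IH] j Hj; first by rewrite /psexp /= coef1 /psone.
rewrite exprS coefM /psexp /= /psmul; apply: eq_bigr => i _.
have Hi : (i < N)%N by apply: leq_ltn_trans Hj; have := ltn_ord i; rewrite ltnS.
have Hi' : (j - i < N)%N by apply: leq_ltn_trans Hj; exact: leq_subr.
by rewrite coef_poly Hi -IH.
Qed.

Lemma psexp_low (f : nat -> RR) e j : f 0%N = 0 -> (j < e)%N -> psexp f e j = 0.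
Proof.
move=> f0; elim: e j => [//|e IH] j Hj.
rewrite /psexp /= /psmul big1 // => i _.
case: (nat_of_ord i) (ltn_ord i) => [|i'] Hi; first by rewrite f0 mul0r.
by rewrite -/(psexp f e (j - i'.+1)) IH ?mulr0 //; rewrite ltnS in Hi; lia.
Qed.

Definition tb N := tpoly N (tbarR bb).
Definition yy N := - (cc%:P * tb N).
Definition Pp N := \sum_(k < N) yy N ^+ k.
Definition Lp : {poly RR} := 1 + cc%:P * 'X.
Definition Dp : {poly RR} := 1 + bb%:P * 'X.
Definition Qp N := Lp * Pp N.

Lemma tb0 N : (tb N)`_0 = 0.
Proof. by rewrite coef_poly; case: ifP. Qed.
Lemma yy0 N : (yy N)`_0 = 0.
Proof. by rewrite coefN coefCM tb0 mulr0 oppr0. Qed.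

Lemma K1 N : eqm N (Dp * tb N) (- 'X).
Proof.
move=> i Hi; rewrite /Dp mulrDl mul1r -mulrA coefD coefCM coefXM coefN coefX.
rewrite !coef_poly Hi.
case: i Hi => [|[|i]] Hi /=; first by rewrite mulr0 addr0 oppr0.
  by case: ifP => _; rewrite expr0 mulr0 addr0.
have -> : (i.+1 < N)%N by lia.
by rewrite oppr0 exprS; ring.
Qed.

Lemma K2 N : eqm N ((1 + cc%:P * tb N) * Pp N) 1.
Proof.
have -> : 1 + cc%:P * tb N = - (yy N - 1) by rewrite /yy; ring.
rewrite mulNr /Pp -subrX1 opprB => i Hi.
by rewrite coefB pow_low ?yy0 // subr0.
Qed.

Lemma K3 N : eqm N (tb N \Po tb N) 'X.
Proof.
set T := tb N \Po tb N; set E := 1 + bb%:P * tb N.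
have Ha : eqm N (E * T) (- tb N).
  have -> : E * T = (Dp * tb N) \Po tb N.
    by rewrite comp_polyM /Dp comp_polyD comp_polyM comp_polyC comp_polyX comp_polyC.
  have -> : - tb N = (- 'X) \Po tb N.
    have -> : (- 'X : {poly RR}) = (-1)%:P * 'X by rewrite polyCN mulN1r.
    by rewrite comp_polyM comp_polyC comp_polyX polyCN mulN1r.
  apply: eqm_comp_l; [exact: K1 | exact: tb0].
have Hb : eqm N (Dp * E) 1.
  have -> : Dp * E = Dp + bb%:P * (Dp * tb N) by rewrite /E; ring.
  apply: eqm_trans (_ : eqm N (Dp + bb%:P * (- 'X)) 1).
    by apply: eqm_add; [exact: eqm_refl | apply: eqm_mul; [exact: eqm_refl | exact: K1]].
  by rewrite /Dp; have -> : 1 + bb%:P * 'X + bb%:P * - 'X = (1 : {poly RR}) by ring.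
have H1 : eqm N T (Dp * E * T).
  by rewrite -[T in eqm _ T _]mul1r; apply: eqm_mul; [exact: eqm_sym | exact: eqm_refl].
apply: eqm_trans H1 _; rewrite -mulrA.
apply: eqm_trans (_ : eqm N (Dp * (- tb N)) 'X).
  by apply: eqm_mul; [exact: eqm_refl | exact: Ha].
rewrite mulrN => i Hi; by rewrite coefN (K1 Hi) coefN opprK.
Qed.

Lemma comp1 (q : {poly RR}) : (1 : {poly RR}) \Po q = 1.
Proof. by rewrite -polyC1 comp_polyC. Qed.

Lemma Lp_comp N : Lp \Po tb N = 1 + cc%:P * tb N.
Proof. by rewrite /Lp comp_polyD comp_polyM !comp_polyC comp_polyX polyC1. Qed.

Lemma K4 N : eqm N (Qp N * (Lp \Po tb N)) Lp.
Proof.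
rewrite Lp_comp /Qp -mulrA [X in eqm _ X _]mulrC -[Lp in eqm _ _ Lp]mul1r.
by apply: eqm_mul; [rewrite mulrC; exact: K2 | exact: eqm_refl].
Qed.

Lemma K5 N : eqm N (Qp N * (Qp N \Po tb N)) 1.
Proof.
have H1 : eqm N (Lp * (Pp N \Po tb N)) 1.
  have H : eqm N (((1 + cc%:P * tb N) * Pp N) \Po tb N) 1.
    by rewrite -[X in eqm _ _ X](comp1 (tb N)); apply: eqm_comp_l; [exact: K2 | exact: tb0].
  rewrite comp_polyM comp_polyD comp_polyM !comp_polyC polyC1 in H.
  apply: eqm_trans H; apply: eqm_mul; last exact: eqm_refl.
  apply: eqm_add; first exact: eqm_refl.
  by apply: eqm_mul; [exact: eqm_refl | apply: eqm_sym; exact: K3].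
have -> : Qp N * (Qp N \Po tb N) = ((1 + cc%:P * tb N) * Pp N) * (Lp * (Pp N \Po tb N)).
  by rewrite /Qp comp_polyM Lp_comp /Qp; ring.
rewrite -[X in eqm _ _ X]mul1r; apply: eqm_mul; [exact: K2 | exact: H1].
Qed.

Lemma lin_Lp j : lin j = Lp`_j.
Proof.
rewrite /Lp coefD coef1 coefCM coefX /lin.
by case: j => [|[|j]] /=; rewrite ?mulr0 ?mulr1 ?addr0 ?add0r.
Qed.

Lemma psi_Pp N j : (j < N)%N -> psi j = (Pp N)`_j.
Proof.
move=> Hj; rewrite /psi /Pp coef_sum.
rewrite (@sum_widen _ (fun n => (- cc) ^+ n * psexp (tbarR bb) n j) j.+1 N) //.
  apply: eq_bigr => k _.
  rewrite /yy -mulNr -polyCN exprMn -rmorphXn coefCM.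
  by rewrite (psexp_tp (N:=N)).
by move=> i Hi _; rewrite psexp_low ?mulr0.
Qed.

Lemma phi_Qp N j : (j < N)%N -> phi j = (Qp N)`_j.
Proof.
move=> Hj; rewrite /phi (psmul_tp (N:=N)) //; apply: (@eqm_mul N) => // i Hi.
  by rewrite coef_poly Hi lin_Lp.
by rewrite coef_poly Hi (psi_Pp (N:=N)).
Qed.

Lemma comp_coef_Q N j : (j < N)%N ->
  \sum_(e2 < N) phi e2 * psexp (tbarR bb) e2 j = (Qp N \Po tb N)`_j.
Proof.
move=> Hj; rewrite (@coef_comp _ _ (size (Qp N) + N)) ?leq_addr //.
rewrite -(@sum_widen _ (fun i => (Qp N)`_i * (tb N ^+ i)`_j) N); last 2 first.
- exact: leq_addl.
- by move=> i Hi _; rewrite pow_low ?tb0 ?mulr0 //; lia.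
by apply: eq_bigr => i _; rewrite (phi_Qp (N:=N)) // (psexp_tp (N:=N)).
Qed.

Lemma comp_coef_Lp N j : (j < N)%N ->
  \sum_(e2 < N) lin e2 * psexp (tbarR bb) e2 j = (Lp \Po tb N)`_j.
Proof.
move=> Hj; rewrite (@coef_comp _ _ (size Lp + N)) ?leq_addr //.
rewrite -(@sum_widen _ (fun i => Lp`_i * (tb N ^+ i)`_j) N); last 2 first.
- exact: leq_addl.
- by move=> i Hi _; rewrite pow_low ?tb0 ?mulr0 //; lia.
by apply: eq_bigr => i _; rewrite lin_Lp (psexp_tp (N:=N)).
Qed.

Lemma ident2 n : \sum_(e1 < n.+1) \sum_(e2 < n.+1)
   phi e1 * phi e2 * psexp (tbarR bb) e2 (n - e1) = (n == 0%N)%:R.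
Proof.
transitivity (\sum_(e1 < n.+1) (Qp n.+1)`_e1 * (Qp n.+1 \Po tb n.+1)`_(n - e1)).
  apply: eq_bigr => e1 _; rewrite -comp_coef_Q ?ltnS ?leq_subr //.
  rewrite mulr_sumr (phi_Qp (N:=n.+1)) //; apply: eq_bigr => e2 _; by rewrite mulrA.
by rewrite -coef1 -(K5 (ltnSn n)) coefM.
Qed.

Lemma ident1 n : \sum_(e1 < n.+1) \sum_(g1 < n.+1)
   phi e1 * lin g1 * psexp (tbarR bb) g1 (n - e1) = lin n.
Proof.
transitivity (\sum_(e1 < n.+1) (Qp n.+1)`_e1 * (Lp \Po tb n.+1)`_(n - e1)).
  apply: eq_bigr => e1 _; rewrite -comp_coef_Lp ?ltnS ?leq_subr //.
  rewrite mulr_sumr (phi_Qp (N:=n.+1)) //; apply: eq_bigr => e2 _; by rewrite mulrA.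
by rewrite lin_Lp -(K4 (ltnSn n)) coefM.
Qed.

Lemma tbarR_C j : tbarR bb j = (tbarR beta j)%:P.
Proof. case: j => [|j] /=; first by rewrite polyC0. by rewrite rmorphN rmorphXn rmorphN. Qed.

Lemma psexp_C n j : psexp (tbarR bb) n j = (psexp (tbarR beta) n j)%:P.
Proof.
elim: n j => [|n IH] j; first by rewrite /psexp /= /psone polyC_natr.
rewrite /psexp /= /psmul rmorph_sum; apply: eq_bigr => i _.
by rewrite rmorphM /= tbarR_C -IH.
Qed.

Lemma lin0 : lin 0 = 1. Proof. by []. Qed.
Lemma phi0 : phi 0 = 1.
Proof.
rewrite /phi /psmul big_ord1 /= /psi big_ord1 /= lin0 mul1r expr0 mul1r.
by rewrite /psexp /= /psone.
Qed.

Definition hasnz (s : seq nat) := has (fun n => n != 0%N) s.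

Lemma prod_ext (e : seq nat) N : (size e <= N)%N ->
  \prod_(i < size e) phi (nth 0%N e i) = \prod_(i < N) phi (nth 0%N e i).
Proof.
move=> H; rewrite -(subnKC H) big_split_ord /= [X in _ = _ * X]big1 ?mulr1 //.
by move=> i _; rewrite nth_default ?phi0 //; apply: leq_addr.
Qed.

Lemma prod_ext_lin (g : seq nat) N : (size g <= N)%N ->
  \prod_(i < size g) lin (nth 0%N g i) = \prod_(i < N) lin (nth 0%N g i).
Proof.
move=> H; rewrite -(subnKC H) big_split_ord /= [X in _ = _ * X]big1 ?mulr1 //.
by move=> i _; rewrite nth_default ?lin0 //; apply: leq_addr.
Qed.

Lemma Pc_cons_e k x e g : Pc k (x :: e) g = phi x * Pc k e g.
Proof.
rewrite /Pc; case: ifP => _; first by rewrite mulr0.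
by rewrite /= big_ord_recl /= mulrA.
Qed.

Lemma Pc_cons_g k x e g : Pc k.+1 e (x :: g) = lin x * Pc k e g.
Proof.
rewrite /Pc /=; case: ifP => _; first by rewrite mulr0.
by rewrite big_ord_recl /=; ring.
Qed.

Lemma Pc_nil_g k e : Pc k.+1 e [::] = Pc k e [::].
Proof. rewrite /Pc /=; congr (_ * _); rewrite !big1 // => i _; by rewrite nth_nil. Qed.

Lemma Pc_split k e g : Pc k e g = Pc 0 e [::] * Pc k [::] g.
Proof.
rewrite /Pc /= big_ord0 mulr1; case: ifP => _; first by rewrite mulr0.
by rewrite big_ord0 mul1r.
Qed.

Lemma nth_rcons0 (s : seq nat) i : nth 0%N (rcons s 0%N) i = nth 0%N s i.
Proof.
rewrite nth_rcons; case: ltnP => // H; rewrite nth_default //; by case: eqP.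
Qed.

Lemma hasnz_drop_rcons k g : hasnz (drop k (rcons g 0%N)) = hasnz (drop k g).
Proof.
rewrite /hasnz; case: (leqP k (size g)) => H.
  by rewrite -cats1 drop_cat ltn_neqAle H andbT; case: eqP => [->|_];
     rewrite ?drop_size ?subnn ?has_cat /= ?orbF.
by rewrite drop_oversize ?size_rcons // drop_oversize // ltnW.
Qed.

Lemma Pc_rcons_e k e g : Pc k (rcons e 0%N) g = Pc k e g.
Proof.
rewrite /Pc size_rcons; case: ifP => _ //; congr (_ * _).
rewrite (@prod_ext e _ (leqnSn _)); apply: eq_bigr => i _; by rewrite nth_rcons0.
Qed.

Lemma Pc_rcons_g k e g : Pc k e (rcons g 0%N) = Pc k e g.
Proof.
rewrite /Pc; have := hasnz_drop_rcons k g; rewrite /hasnz => ->; case: ifP => _ //; congr (_ * _).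
by apply: eq_bigr => i _; rewrite nth_rcons0.
Qed.

Lemma hasnz_dropP k g :
  ~~ hasnz (drop k g) <-> (forall j, (k <= j)%N -> nth 0%N g j = 0%N).
Proof.
split.
- move=> H j Hj; apply/eqP; apply: contraNT H => Hne; apply/(has_nthP 0%N).
  have Hs : (j < size g)%N by case: ltnP Hne => // Hg; rewrite nth_default.
  exists (j - k)%N; first by rewrite size_drop; lia.
  by rewrite nth_drop subnKC.
- move=> H; apply/negP => /(has_nthP 0%N) [i _]; by rewrite nth_drop H ?leq_addr.
Qed.

Definition sw (p j : nat) : nat := if j == p then p.+1 else if j == p.+1 then p else j.

Lemma sw_invol p j : sw p (sw p j) = j.
Proof. rewrite /sw; do ! case: eqP => /=; lia. Qed.

Lemma sw_ge p k j : ((p.+1 < k) || (k <= p))%N -> (k <= j)%N -> (k <= sw p j)%N.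
Proof. rewrite /sw => /orP [H|H] Hj; do ! case: eqP; lia. Qed.

Lemma sw_lt p k j : (k <= p)%N -> (j < k)%N -> sw p j = j.
Proof. rewrite /sw => H Hj; do ! case: eqP; lia. Qed.

Lemma nth_swap p g j : nth 0%N (swapexp p g) j = nth 0%N g (sw p j).
Proof.
rewrite /swapexp; case: (ltnP j (maxn (size g) p.+2)) => H.
  by rewrite (nth_map 0%N) ?size_iota // nth_iota.
rewrite nth_default ?size_map ?size_iota // /sw.
have -> : (j == p) = false by apply/eqP; lia.
have -> : (j == p.+1) = false by apply/eqP; lia.
rewrite nth_default //; lia.
Qed.

Lemma hasnz_swap p k g : ((p.+1 < k) || (k <= p))%N ->
  hasnz (drop k (swapexp p g)) = hasnz (drop k g).
Proof.
move=> Hc.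
have E : (forall j, (k <= j)%N -> nth 0%N (swapexp p g) j = 0%N) <->
         (forall j, (k <= j)%N -> nth 0%N g j = 0%N).
  split=> H j Hj.
    by rewrite -(sw_invol p j) -nth_swap H // sw_ge.
  by rewrite nth_swap H // sw_ge.
apply/idP/idP; apply: contraLR => /hasnz_dropP H; apply/hasnz_dropP; by apply/E.
Qed.

Lemma Pc_swap p k e g : ((p.+1 < k) || (k <= p))%N ->
  Pc k e (swapexp p g) = Pc k e g.
Proof.
move=> Hc; rewrite /Pc; have := hasnz_swap g Hc; rewrite /hasnz => ->.
case: ifP => _ //; congr (_ * _).
case/orP: Hc => Hc; last first.
  by apply: eq_bigr => i _; rewrite nth_swap (@sw_lt p k).
have Ha : (p < k)%N by lia.
pose a := Ordinal Ha; pose b := Ordinal Hc.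
rewrite (reindex_inj (@perm_inj _ (tperm a b))); apply: eq_bigr => i _.
have -> : nat_of_ord (tperm a b i) = sw p i.
  rewrite /sw; case: (i =P a) => [->|/eqP Hia]; first by rewrite tpermL /= eqxx.
  case: (i =P b) => [->|/eqP Hib].
    by rewrite tpermR /= eqxx; case: eqP => //; lia.
  rewrite tpermD 1?eq_sym //.
  rewrite ifN_eq; last by apply: contra Hia => /eqP Hv; apply/eqP/val_inj.
  by rewrite ifN_eq //; apply: contra Hib => /eqP Hv; apply/eqP/val_inj.
by rewrite nth_swap sw_invol.
Qed.

Lemma Pc_perm n (s : 'S_n) e g : (size e <= n)%N ->
  Pc 0 [seq nth 0%N e (s i) | i <- enum 'I_n] g = Pc 0 e g.
Proof.
move=> He; rewrite /Pc; case: ifP => _ //; congr (_ * _).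
rewrite size_map size_enum_ord (@prod_ext e n He).
rewrite [RHS](reindex_inj (@perm_inj _ s)); apply: eq_bigr => i _.
by rewrite (nth_map i) ?size_enum_ord // nth_ord_enum.
Qed.

Lemma Pc0_g e g : ~~ hasnz g -> Pc 0 e g = Pc 0 e [::].
Proof. move=> H; rewrite /Pc drop0; move: H; rewrite /hasnz => /negbTE -> /=. by rewrite !big_ord0. Qed.

Lemma Pc_hasnz k e g : hasnz (drop k g) -> Pc k e g = 0.
Proof. by rewrite /Pc /hasnz => ->. Qed.

Definition homog (d : nat) (P : RR) := forall a b, (P`_a)`_b != 0 -> (a + b)%N = d.

Lemma homog0 d : homog d 0.
Proof. by move=> a b; rewrite coef0 coef0 eqxx. Qed.

Lemma homog_eq d d' P : d = d' -> homog d P -> homog d' P.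
Proof. by move=> ->. Qed.

Lemma homog_add d P Q : homog d P -> homog d Q -> homog d (P + Q).
Proof.
move=> HP HQ a b; rewrite !coefD; case: (eqVneq ((P`_a)`_b) 0) => [->|/HP //].
by rewrite add0r => /HQ.
Qed.

Lemma homog_opp d P : homog d P -> homog d (- P).
Proof. by move=> HP a b; rewrite !coefN oppr_eq0 => /HP. Qed.

Lemma homog_sum d n (F : 'I_n -> RR) : (forall i, homog d (F i)) -> homog d (\sum_(i < n) F i).
Proof.
move=> H; elim/big_ind: _ => //; [exact: homog0 | by move=> x y; apply: homog_add].
Qed.

Lemma homog_mul d1 d2 P Q : homog d1 P -> homog d2 Q -> homog (d1 + d2) (P * Q).
Proof.
move=> HP HQ a b Hnz; apply/eqP; apply: contraNT Hnz => Hne; apply/eqP.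
rewrite coefM coef_sum big1 // => i _; rewrite coefM big1 // => l _.
case: (eqVneq ((P`_i)`_l) 0) => [->|/HP H1]; first by rewrite mul0r.
case: (eqVneq ((Q`_(a - i))`_(b - l)) 0) => [->|/HQ H2]; first by rewrite mulr0.
have := ltn_ord i; have := ltn_ord l; move: Hne => /eqP Hne; lia.
Qed.

Lemma homog1 : homog 0 1.
Proof.
move=> a b; rewrite coef1; case: a => [|a] /=; last by rewrite coef0 eqxx.
by rewrite coef1; case: b.
Qed.

Lemma homog_prod n (w : 'I_n -> nat) (F : 'I_n -> RR) :
  (forall i, homog (w i) (F i)) -> homog (\sum_(i < n) w i) (\prod_(i < n) F i).
Proof.
elim: n w F => [|n IH] w F H; first by rewrite !big_ord0; exact: homog1.
rewrite big_ord_recr [X in homog _ X]big_ord_recr /=.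
by apply: homog_mul => //; apply: IH.
Qed.

Lemma homog_pow d P n : homog d P -> homog (d * n) (P ^+ n).
Proof.
move=> H; elim: n => [|n IH]; first by rewrite muln0 expr0; exact: homog1.
by rewrite exprS mulnS; apply: homog_mul.
Qed.

Lemma homog_bb : homog 1 bb.
Proof.
move=> a b; rewrite /bb /beta coefC; case: a => [|a] /=; last by rewrite coef0 eqxx.
by rewrite coefX; case: b => [|[|b]].
Qed.

Lemma homog_uu : homog 1 uu.
Proof.
move=> a b; rewrite /uu coefX; case: a => [|[|a]] /=; rewrite ?coef0 ?eqxx //.
by rewrite coef1; case: b.
Qed.

Lemma homog_cc : homog 1 cc.
Proof. by apply: homog_add; [exact: homog_uu | exact: homog_bb]. Qed.

Lemma homog_lin j : homog j (lin j).
Proof.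
by case: j => [|[|j]]; rewrite /lin /=; [exact: homog1 | exact: homog_cc | exact: homog0].
Qed.

Lemma homog_tbar j : homog j.-1 (tbarR bb j).
Proof.
case: j => [|j] /=; first exact: homog0.
apply: homog_opp; apply: (@homog_eq (1 * j)); first by rewrite mul1n.
by apply: homog_pow; apply: homog_opp; exact: homog_bb.
Qed.

Lemma homog_TB n j : homog (j - n) (psexp (tbarR bb) n j).
Proof.
elim: n j => [|n IH] j.
  rewrite /psexp /= /psone; case: j => [|j] /=; [exact: homog1 | exact: homog0].
rewrite /psexp /= /psmul; apply: homog_sum => i.
case: (nat_of_ord i) (ltn_ord i) => [|i'] Hi; first by rewrite /= mul0r; exact: homog0.
case: (leqP n (j - i'.+1)) => Hn.
  apply: (@homog_eq (i' + (j - i'.+1 - n))); first by lia.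
  by apply: homog_mul; [exact: (@homog_tbar i'.+1) | exact: IH].
by rewrite -/(psexp (tbarR bb) n (j - i'.+1)) psexp_low // mulr0; exact: homog0.
Qed.

Lemma homog_psi j : homog j (psi j).
Proof.
apply: homog_sum => n; apply: (@homog_eq (1 * n + (j - n))).
  by have := ltn_ord n; lia.
apply: homog_mul; last exact: homog_TB.
by apply: homog_pow; apply: homog_opp; exact: homog_cc.
Qed.

Lemma homog_phi j : homog j (phi j).
Proof.
apply: homog_sum => i; apply: (@homog_eq (i + (j - i))).
  by have := ltn_ord i; lia.
apply: homog_mul; [exact: homog_lin | exact: homog_psi].
Qed.

Lemma sum_nth_take k (s : seq nat) : (\sum_(i < k) nth 0%N s i)%N = sumn (take k s).
Proof.
elim: s k => [|x s IH] k.
  by rewrite big1 // => i _; rewrite nth_nil.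
case: k => [|k]; first by rewrite big_ord0.
by rewrite big_ord_recl /= IH.
Qed.

Lemma homog_Pc k e g : homog (sumn e + sumn (take k g)) (Pc k e g).
Proof.
rewrite /Pc; case: ifP => _; first exact: homog0.
apply: (@homog_eq (sumn (take (size e) e) + sumn (take k g))); first by rewrite take_size.
apply: homog_mul; rewrite -sum_nth_take; apply: homog_prod => i; [exact: homog_phi|exact: homog_lin].
Qed.

Definition Lt (m : int) (P : RR) : {poly rat} :=
  \sum_(j < size P | m <= j%:Z) (- beta) ^+ absz (j%:Z - m) * P`_j.

Definition Ls (m : int) (P : RR) : {poly rat} :=
  (2%:R : rat)^-1 *:
  \sum_(s < (absz ((size P)%:Z - m)).+1)
    ((- (2%:R : rat)^-1) ^+ s *: beta ^+ s) * Lt (m + s%:Z) P.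

Lemma GTheta_Lt k m e g : GTheta k m e g = Lt m (Pc k e g). Proof. by []. Qed.
Lemma GThetaS_Ls k m e g : GThetaS k m e g = Ls m (Pc k e g). Proof. by []. Qed.

Definition linL (L : RR -> {poly rat}) :=
  (forall P Q, L (P + Q) = L P + L Q) /\ (forall c P, L (c%:P * P) = c * L P).

Lemma linL0 L : linL L -> L 0 = 0.
Proof. by case=> _ H; rewrite -(mul0r 0) -polyC0 H mul0r. Qed.

Lemma linL_sum L n (F : 'I_n -> RR) : linL L -> L (\sum_(i < n) F i) = \sum_(i < n) L (F i).
Proof. by move=> HL; apply: big_morph; [exact: HL.1 | exact: linL0]. Qed.

Lemma LtB m (P : RR) B : (size P <= B)%N ->
  Lt m P = \sum_(j < B | m <= j%:Z) (- beta) ^+ absz (j%:Z - m) * P`_j.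
Proof.
move=> HB; rewrite /Lt big_mkcond [RHS]big_mkcond /=.
apply: (@sum_widen _ (fun j : nat => if m <= j%:Z then (- beta) ^+ absz (j%:Z - m) * P`_j else 0)) => //.
by move=> i Hi _; rewrite nth_default // mulr0; case: ifP.
Qed.

Lemma linLt m : linL (Lt m).
Proof.
split.
  move=> P Q; rewrite (@LtB m (P + Q) (size P + size Q)); last first.
    by apply: leq_trans (size_polyD _ _) _; rewrite geq_max leq_addr leq_addl.
  rewrite (@LtB m P (size P + size Q)) ?leq_addr // (@LtB m Q (size P + size Q)) ?leq_addl //.
  by rewrite -big_split; apply: eq_bigr => j _; rewrite coefD mulrDr.
move=> c P; rewrite (@LtB m (c%:P * P) (size P)); last first.
  apply: leq_trans (size_polyMleq _ _) _; have := size_polyC_leq1 c; lia.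
by rewrite /Lt mulr_sumr; apply: eq_bigr => j _; rewrite coefCM mulrCA.
Qed.

Lemma LtZ m (P : RR) : (size P)%:Z <= m -> Lt m P = 0.
Proof. by move=> H; rewrite /Lt big1 // => j Hj; have := ltn_ord j; lia. Qed.

Lemma Lt_shift m (P : RR) t : Lt m (P * 'X^t) = Lt (m - t%:Z) P.
Proof.
rewrite (@LtB m _ (t + size P)); last first.
  apply: leq_trans (size_polyMleq _ _) _; rewrite size_polyXn; lia.
rewrite big_mkcond big_split_ord /= big1 ?add0r; last first.
  by move=> i _; rewrite coefMXn ltn_ord mulr0; case: ifP.
rewrite /Lt [RHS]big_mkcond /=; apply: eq_bigr => i _.
rewrite coefMXn ltnNge leq_addr /= addKn.
have -> : (m <= (t + i)%N%:Z) = (m - t%:Z <= i%:Z) by apply/idP/idP; lia.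
by case: ifP => // _; congr (_ ^+ _ * _); lia.
Qed.

Lemma LsB m (P : RR) N : (absz ((size P)%:Z - m) < N)%N ->
  Ls m P = (2%:R : rat)^-1 *:
  \sum_(s < N) ((- (2%:R : rat)^-1) ^+ s *: beta ^+ s) * Lt (m + s%:Z) P.
Proof.
move=> HN; rewrite /Ls; congr (_ *: _).
apply: (@sum_widen _ (fun s : nat => ((- (2%:R : rat)^-1) ^+ s *: beta ^+ s) * Lt (m + s%:Z) P)) => //.
by move=> i Hi _; rewrite LtZ ?mulr0 //; lia.
Qed.

Lemma linLs m : linL (Ls m).
Proof.
split.
  move=> P Q.
  set N := (absz ((size (P + Q)%R)%:Z - m) + absz ((size P)%:Z - m) + absz ((size Q)%:Z - m)).+1.
  rewrite (@LsB m (P + Q) N) ?(@LsB m P N) ?(@LsB m Q N); try (rewrite /N; lia).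
  rewrite -scalerDr -big_split; congr (_ *: _); apply: eq_bigr => s _.
  by rewrite (linLt _).1 mulrDr.
move=> c P.
set N := (absz ((size (c%:P * P)%R)%:Z - m) + absz ((size P)%:Z - m)).+1.
rewrite (@LsB m (c%:P * P) N) ?(@LsB m P N); try (rewrite /N; lia).
rewrite -scalerAr mulr_sumr; congr (_ *: _); apply: eq_bigr => s _.
by rewrite (linLt _).2 mulrCA.
Qed.

Lemma Ls_shift m (P : RR) t : Ls m (P * 'X^t) = Ls (m - t%:Z) P.
Proof.
set N := (absz ((size (P * 'X^t)%R)%:Z - m)%R + absz (((size P)%:Z - (m - t%:Z))%R)).+1.
rewrite (@LsB m _ N) ?(@LsB (m - t%:Z) P N); try (rewrite /N; lia).
congr (_ *: _); apply: eq_bigr => s _; rewrite Lt_shift; congr (_ * Lt _ _); ring.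
Qed.

Definition Lgr (L : RR -> {poly rat}) (m : int) :=
  forall d P, homog d P -> forall i, (L P)`_i != 0 -> d%:Z - i%:Z = m.

Lemma coef_negX s (q : {poly rat}) i :
  ((- beta) ^+ s * q)`_i = (-1) ^+ s * (if (i < s)%N then 0 else q`_(i - s)).
Proof.
rewrite [(- beta) ^+ s]exprNn -mulrA -(@signr_odd {poly rat} s) -(@signr_odd rat s) /beta.
by case: (odd s); rewrite ?expr1 ?expr0 ?mulN1r ?mul1r ?coefN coefXnM.
Qed.

Lemma Lt_gr m : Lgr (Lt m) m.
Proof.
move=> d P HP i Hnz; apply/eqP; apply: contraNT Hnz => Hne; apply/eqP.
rewrite /Lt coef_sum big1 // => j Hj; rewrite coef_negX.
case: ifP => Hi; first by rewrite mulr0.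
case: (eqVneq ((P`_j)`_(i - absz (j%:Z - m))) 0) => [->|/HP H]; first by rewrite mulr0.
move/negbT: Hi; rewrite -leqNgt => Hi.
by move: Hne => /eqP Hne; exfalso; apply: Hne; lia.
Qed.

Lemma Ls_gr m : Lgr (Ls m) m.
Proof.
move=> d P HP i Hnz; apply/eqP; apply: contraNT Hnz => Hne; apply/eqP.
rewrite /Ls coefZ coef_sum big1 ?mulr0 // => s _.
rewrite -scalerAl coefZ /beta coefXnM.
case: ifP => Hi; first by rewrite mulr0.
case: (eqVneq ((Lt (m + s%:Z) P)`_(i - s)) 0) => [->|/(Lt_gr HP) H]; first by rewrite mulr0.
move/negbT: Hi; rewrite -leqNgt => Hi.
by move: Hne => /eqP Hne; exfalso; apply: Hne; lia.
Qed.

Lemma subexps_mem e x : x \in subexps e ->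
  size x = size e /\ forall i, (nth 0%N x i <= nth 0%N e i)%N.
Proof.
elim: e x => [|n e IH] x; first by rewrite /= inE => /eqP ->.
case/allpairsP => [[i s] [Hi Hs ->]]; have [Hsz Hn] := IH _ Hs.
rewrite mem_iota /= in Hi; split; first by rewrite /= Hsz.
by case=> [|j] /=; [lia | exact: Hn].
Qed.

Lemma subexps_self e : e \in subexps e.
Proof.
elim: e => [|n e IH]; first by rewrite /= inE.
by apply/allpairsP; exists (n, e); split => //; rewrite mem_iota /=; lia.
Qed.

Lemma subexps_zero e : nseq (size e) 0%N \in subexps e.
Proof.
elim: e => [|n e IH]; first by rewrite /= inE.
by apply/allpairsP; exists (0%N, nseq (size e) 0%N); split => //; rewrite mem_iota /=; lia.
Qed.

Lemma subexps_uniq e : uniq (subexps e).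
Proof.
elim: e => [|n e IH] //; apply: allpairs_uniq => //; first exact: iota_uniq.
by move=> [i s] [i' s'] _ _ /= [-> ->].
Qed.

Lemma nohasnz_nth s : ~~ hasnz s -> forall i, nth 0%N s i = 0%N.
Proof. by move=> H i; have := (hasnz_dropP 0 s).1; rewrite drop0 => /(_ H); apply. Qed.

Lemma nohasnz_nseq s : ~~ hasnz s -> s = nseq (size s) 0%N.
Proof.
move=> H; apply: (@eq_from_nth _ 0%N); first by rewrite size_nseq.
by move=> i Hi; rewrite nth_nseq Hi nohasnz_nth.
Qed.

Lemma size_esub e e1 : size (esub e e1) = size e.
Proof. by rewrite /esub size_map size_iota. Qed.

Lemma nth_esub e e1 i : nth 0%N (esub e e1) i = (nth 0%N e i - nth 0%N e1 i)%N.
Proof.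
case: (ltnP i (size e)) => H.
  by rewrite /esub (nth_map 0%N) ?size_iota // nth_iota.
by rewrite nth_default ?size_esub // (@nth_default _ _ e) // sub0n.
Qed.

Lemma esub_zero g : esub g (nseq (size g) 0%N) = g.
Proof.
apply: (@eq_from_nth _ 0%N); first by rewrite size_esub.
by move=> i Hi; rewrite nth_esub nth_nseq; case: ifP => _; rewrite subn0.
Qed.

Lemma esub_self e : esub e e = nseq (size e) 0%N.
Proof.
apply: (@eq_from_nth _ 0%N); first by rewrite size_esub size_nseq.
by move=> i Hi; rewrite nth_esub nth_nseq subnn; case: ifP.
Qed.

Lemma sermul_sep f h e g : afree f -> xfree h ->
  sermul f h e g = f e (nseq (size g) 0%N) * h (nseq (size e) 0%N) g.
Proof.
move=> Hf Hh; rewrite /sermul.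
rewrite (bigD1_seq e) ?subexps_self ?subexps_uniq //= [X in _ + X]big1_seq ?addr0; last first.
  move=> e1 /andP[Hne Hin]; apply: big1_seq => g1 _; rewrite Hh ?mulr0 //.
  apply: contraNT Hne => Hz; apply/eqP.
  have [Hsz Hle] := subexps_mem Hin.
  apply: (@eq_from_nth _ 0%N) => // i _.
  have := nohasnz_nth Hz i; rewrite nth_esub; have := Hle i; lia.
rewrite (bigD1_seq (nseq (size g) 0%N)) ?subexps_zero ?subexps_uniq //= [X in _ + X]big1_seq ?addr0; last first.
  move=> g1 /andP[Hne Hin]; rewrite Hf ?mul0r //.
  apply: contraNT Hne => Hz; apply/eqP.
  have [Hsz _] := subexps_mem Hin.
  by rewrite (nohasnz_nseq Hz) Hsz.
by rewrite esub_zero esub_self.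
Qed.

Lemma pull L n (P : nat -> nat -> RR) (q : nat -> nat -> {poly rat}) : linL L ->
  \sum_(a < n) \sum_(b < n) L (P a b) * q a b =
  L (\sum_(a < n) \sum_(b < n) (q a b)%:P * P a b).
Proof.
move=> HL; rewrite linL_sum //; apply: eq_bigr => a _.
rewrite linL_sum //; apply: eq_bigr => b _; by rewrite HL.2 mulrC.
Qed.

Lemma hasnz_nseq n : hasnz (nseq n 0%N) = false.
Proof. by rewrite /hasnz has_nseq andbF. Qed.

Lemma sumn_nohasnz s : ~~ hasnz s -> sumn s = 0%N.
Proof. by move/nohasnz_nseq => ->; rewrite sumn_nseq. Qed.

Lemma subst_ok L : linL L ->
  subst_t_tbar (fun e g => L (Pc 0 e g)) = subst_0_0 (fun e g => L (Pc 0 e g)).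
Proof.
move=> HL; apply: functional_extensionality => e; apply: functional_extensionality => g.
rewrite /subst_t_tbar /subst_0_0; case: eqP => [H1|H1]; last by rewrite andbF.
rewrite andbT /=.
set n := nth 0%N e 0; set r := drop 2 e.
rewrite (@pull L n.+1 (fun a b => Pc 0 (a :: b :: r) g)
           (fun a b => psexp (tbarR beta) b (n - a))) //.
transitivity (L ((\sum_(a < n.+1) \sum_(b < n.+1)
     phi a * phi b * psexp (tbarR bb) b (n - a)) * Pc 0 r g)).
  congr L; rewrite mulr_suml; apply: eq_bigr => a _; rewrite mulr_suml.
  apply: eq_bigr => b _; rewrite -psexp_C !Pc_cons_e; ring.
rewrite ident2 !Pc_cons_e phi0 !mul1r; case: (n == 0%N); first by rewrite mul1r.
by rewrite mul0r linL0.
Qed.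

Lemma G_in L m : linL L -> Lgr L m -> inGGamma (fun e g => L (Pc 0 e g)).
Proof.
move=> HL Hgr; split.
- by move=> e g; rewrite Pc_rcons_e Pc_rcons_g.
- exists [:: m] => e g i Hnz; rewrite inE /mdeg; apply/eqP.
  case Hg: (hasnz g).
    by move: Hnz; rewrite Pc_hasnz ?drop0 // linL0 // coef0 eqxx.
  rewrite (sumn_nohasnz (negbT Hg)) addn0.
  have := Hgr _ _ (@homog_Pc 0 e g) i Hnz; by rewrite take0 /= addn0.
- by move=> e g Hg; rewrite Pc_hasnz ?drop0 // linL0.
- by move=> n s e g He; rewrite Pc_perm.
- exact: subst_ok.
Qed.

Lemma R_in k t : inRa (fun e g => if hasnz e then 0 else (Pc k [::] g)`_t).
Proof.
split.
- move=> e g; split; last by rewrite Pc_rcons_g.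
  by rewrite /hasnz has_rcons /= -/(hasnz e).
- exists [:: t%:Z] => e g i; rewrite inE /mdeg.
  case He: (hasnz e); first by rewrite coef0 eqxx.
  case Hd: (hasnz (drop k g)); first by rewrite Pc_hasnz // !coef0 eqxx.
  move=> /(@homog_Pc k [::] g) /=; rewrite (sumn_nohasnz (negbT He)).
  have -> : sumn g = sumn (take k g) by rewrite -{1}(cat_take_drop k g) sumn_cat (sumn_nohasnz (negbT Hd)) addn0.
  move=> H; apply/eqP; lia.
- by move=> e g He; rewrite /hasnz He.
- exists k => e g Hd; rewrite Pc_hasnz //; by case: ifP; rewrite ?coef0.
Qed.

Lemma expand_poly (p : RR) B : (size p <= B)%N -> p = \sum_(t < B) (p`_t)%:P * 'X^t.
Proof.
move=> HB; have -> : \sum_(t < B) (p`_t)%:P * 'X^t = \poly_(i < B) p`_i.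
  by rewrite poly_def; apply: eq_bigr => t _; rewrite mul_polyC.
apply/polyP => i; rewrite coef_poly; case: ifP => // /negbT; rewrite -leqNgt => Hi.
by rewrite nth_default //; apply: leq_trans HB Hi.
Qed.

Lemma size_lin x : (size (lin x) <= 2)%N.
Proof.
rewrite /lin; case: eqP => _; first by rewrite size_poly1.
case: eqP => _; last by rewrite size_poly0.
by rewrite /cc /uu size_XaddC.
Qed.

Lemma size_prod_lin k g : (size (\prod_(i < k) lin (nth 0%N g i))%R <= k.+1)%N.
Proof.
elim: k => [|k IH]; first by rewrite big_ord0 size_poly1.
rewrite big_ord_recr /=; apply: leq_trans (size_polyMleq _ _) _.
rewrite -subn1 leq_subLR; apply: leq_trans (leq_add IH (size_lin _)) _; by rewrite addn2 add1n.
Qed.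

Lemma size_Pck k g : (size (Pc k [::] g) <= k.+1)%N.
Proof.
rewrite /Pc; case: ifP => _; first by rewrite size_poly0.
by rewrite big_ord0 mul1r size_prod_lin.
Qed.

Lemma decomp (L : int -> RR -> {poly rat}) k m e g :
  (forall m, linL (L m)) ->
  (forall m P t, L m (P * 'X^t) = L (m - t%:Z) P) ->
  L m (Pc k e g) = \sum_(t < k.+1) (Pc k [::] g)`_t * L (m - t%:Z) (Pc 0 e [::]).
Proof.
move=> HL Hsh; rewrite Pc_split {1}(expand_poly (size_Pck k g)) mulr_sumr linL_sum //.
by apply: eq_bigr => t _; rewrite mulrCA (HL m).2 Hsh.
Qed.

Lemma inGR (L : int -> RR -> {poly rat}) k m :
  (forall m, linL (L m)) -> (forall m, Lgr (L m) m) ->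
  (forall m P t, L m (P * 'X^t) = L (m - t%:Z) P) ->
  inGGammaRa (fun e g => L m (Pc k e g)).
Proof.
move=> HL Hgr Hsh.
exists k.+1, (fun t : 'I_k.+1 => fun e g => L (m - t%:Z) (Pc 0 e g)),
  (fun t : 'I_k.+1 => fun e g => if hasnz e then 0 else (Pc k [::] g)`_t).
split; first by move=> t; split; [exact: G_in | exact: R_in].
move=> e g; rewrite (@decomp L k m e g HL Hsh); apply: eq_bigr => t _.
have [_ _ Haf _ _] := G_in (HL (m - t%:Z)) (Hgr (m - t%:Z)).
have [_ _ Hxf _] := R_in k t.
by rewrite sermul_sep // hasnz_nseq Pc0_g ?hasnz_nseq // mulrC.
Qed.

Lemma inv (L : RR -> {poly rat}) k i : linL L -> (i < k)%N \/ (k < i)%N ->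
  sa i (fun e g => L (Pc k e g)) = fun e g => L (Pc k e g).
Proof.
move=> HL H; apply: functional_extensionality => e; apply: functional_extensionality => g.
rewrite /sa; case: i H => [|i] H /=.
  case: k H => [|k] H; first by case: H.
  rewrite /s0a; set g0 := head 0%N g.
  rewrite (@pull L g0.+1 (fun a b => Pc k.+1 (a :: e) (b :: behead g))
           (fun a b => psexp (tbarR beta) b (g0 - a))) //.
  transitivity (L ((\sum_(a < g0.+1) \sum_(b < g0.+1)
     phi a * lin b * psexp (tbarR bb) b (g0 - a)) * Pc k e (behead g))).
    congr L; rewrite mulr_suml; apply: eq_bigr => a _; rewrite mulr_suml.
    apply: eq_bigr => b _; rewrite -psexp_C Pc_cons_e Pc_cons_g; ring.
  rewrite ident1 {}/g0; case: g => [|x g] /=; first by rewrite lin0 mul1r Pc_nil_g.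
  by rewrite Pc_cons_g.
rewrite /sia /= Pc_swap //; apply/orP; case: H => H; [left | right]; lia.
Qed.

Unset Implicit Arguments.

Theorem lemma9p1 (k : nat) (m : int) :
  [/\ inGGammaRa (GTheta k m), inGGammaRa (GThetaS k m),
      (forall i : nat, (i < k)%N \/ (k < i)%N -> sa i (GTheta k m) = GTheta k m) &
      (forall i : nat, (i < k)%N \/ (k < i)%N -> sa i (GThetaS k m) = GThetaS k m)].
Proof.
split.
- exact: (@inGR Lt k m linLt Lt_gr Lt_shift).
- exact: (@inGR Ls k m linLs Ls_gr Ls_shift).
- move=> i Hi; exact: (@inv (Lt m) k i (linLt m) Hi).
- move=> i Hi; exact: (@inv (Ls m) k i (linLs m) Hi).
Qed.
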